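(* Let $c_1,\dots,c_r\in K^\times$. For $1\le s\le r$ let $f_s=(\tau+c_s)(\tau+c_{s-1})\cdots(\tau+c_1)\in K\{\tau\}$ and $W_s=\{\lambda\in K^{\rm sep}: f_s(\lambda)=0\}$. Then $0=W_0\subset W_1\subset\cdots\subset W_r$ are $G_K$-stable $\mathbb{F}_q$-subspaces with $\dim W_s=s$, and the representation $\bar\rho:G_K\to\mathrm{GL}_{\mathbb{F}_q}(W_r)\cong\mathrm{GL}_r(\mathbb{F}_q)$ is isomorphic to an upper triangular representation with diagonal characters $\kappa_{(-c_1)},\kappa_{(-c_2)},\dots,\kappa_{(-c_r)}$.
   Context: $p$ prime, $q$ a power of $p$, $F=\mathbb{F}_q(t)$, $K$ a finite extension of $F$. $K\{\tau\}$ is the twisted polynomial ring with $\tau c=c^q\tau$, acting on $K^{\rm sep}$ with $\tau$ the $q$-th power map. For $c\in K^\times$, $\kappa_{(c)}:G_K\to\mathbb{F}_q^\times$ is the Kummer character $\sigma\mapsto\sigma(\lambda)/\lambda$ for any $\lambda\in K^{\rm sep}$ with $\lambda^{q-1}=c$ (i.e. the character corresponding to the class of $c$ under $K^\times/(K^\times)^{q-1}\cong\mathrm{Hom}(G_K,\mathbb{F}_q^\times)$). *)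

(* Defs.v *)
From HB Require Import structures.
From mathcomp Require Import all_boot all_order all_algebra.
From mathcomp Require Import fraction vector falgebra fieldext separable.
From Stdlib Require Import ClassicalEpsilon.
Set Implicit Arguments. Unset Strict Implicit. Unset Printing Implicit Defensive.
Import GRing.Theory.
Local Open Scope ring_scope.

Definition Fqt (Fq : finFieldType) := {fraction {poly Fq}}.

Section Defs.
Variables (Fq : finFieldType) (K : fieldExtType (Fqt Fq)) (L : fieldType).
Variable iota : {rmorphism K -> L}.

Definition qq : nat := #|Fq|.

Definition embFq (a : Fq) : L := iota ((tofrac (a%:P)) %:A).

Definition is_sep_closure : Prop :=
  (forall x : L, exists p : {poly K},
      [/\ p != 0, separable_poly p & root (map_poly iota p) x]) /\
  (forall p : {poly K}, separable_poly p ->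
      exists rs : seq L,
        map_poly iota p = (iota (lead_coef p))%:P * \prod_(x <- rs) ('X - x%:P)).

Definition in_GK (sigma : {rmorphism L -> L}) : Prop :=
  bijective sigma /\ forall x : K, sigma (iota x) = iota x.

Definition tau_plus (a : L) (x : L) : L := x ^+ qq + a * x.

Fixpoint f_act (c : nat -> K) (s : nat) (x : L) : L :=
  match s with
  | 0 => x
  | s'.+1 => tau_plus (iota (c s)) (f_act c s' x)
  end.

Definition Wsp (c : nat -> K) (s : nat) : pred L := fun x => f_act c s x == 0.

Definition Fq_comb (n : nat) (a : 'I_n -> Fq) (w : 'I_n -> L) : L :=
  \sum_(i < n) embFq (a i) * w i.

Definition Fq_subspace (W : pred L) : Prop :=
  [/\ 0 \in W, (forall x y, x \in W -> y \in W -> x + y \in W)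
    & forall (a : Fq) x, x \in W -> embFq a * x \in W].

Definition GK_stable (W : pred L) : Prop :=
  forall sigma : {rmorphism L -> L}, in_GK sigma ->
    forall x, x \in W -> sigma x \in W.

Definition Fq_basis (W : pred L) (n : nat) (w : 'I_n -> L) : Prop :=
  [/\ forall i, w i \in W,
      (forall a : 'I_n -> Fq, Fq_comb a w = 0 -> forall i, a i = 0)
    & forall x, x \in W -> exists a : 'I_n -> Fq, x = Fq_comb a w].

Definition Fq_dim (W : pred L) (n : nat) : Prop :=
  exists w : 'I_n -> L, Fq_basis W w.

Definition kummer (d : L) (sigma : L -> L) : L :=
  let lam := epsilon (inhabits (0 : L)) (fun l : L => l ^+ qq.-1 = d) in
  sigma lam / lam.

End Defs.

(* Main.v *)
Require Import Defs.
From HB Require Import structures.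
From mathcomp Require Import all_boot all_order all_algebra all_fingroup all_solvable.
From mathcomp Require Import fraction vector falgebra fieldext separable finfield.
From Stdlib Require Import ClassicalEpsilon.
From mathcomp Require Import zify.
Set Implicit Arguments. Unset Strict Implicit. Unset Printing Implicit Defensive.
Import GRing.Theory.
Local Open Scope ring_scope.
Section S.
Variables (Fq : finFieldType) (K : fieldExtType (Fqt Fq)) (L : fieldType) (iota : {rmorphism K -> L}).
Definition eK : {rmorphism Fq -> K} := in_alg K \o (@tofrac {poly Fq}) \o polyC.
Definition eR : {rmorphism Fq -> L} := iota \o eK.
Lemma eRE a : embFq iota a = eR a. Proof. by []. Qed.
Lemma eR_iota a : eR a = iota (eK a). Proof. by []. Qed.
Opaque eR.
Local Notation q := (qq Fq).
Lemma q_gt1 : (1 < q)%N. Proof. exact: finNzRing_gt1. Qed.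
Lemma q_gt0 : (0 < q)%N. Proof. exact: ltnW q_gt1. Qed.
Lemma charq : exists p k, [/\ p \in [pchar L], p \in [pchar K] & q = (p ^ k.+1)%N].
Proof.
have [p pp pc] := finPcharP Fq.
have pn : p.-nat q.
  rewrite /qq -cardsT. apply: abelem_pgroup. exact: fin_ring_pchar_abelem.
have [k qE] := p_natP pn.
exists p, k.-1; split; first by apply: (rmorph_pchar eR).
  by apply: (rmorph_pchar eK).
case: k qE => [|k] //= qE; have := q_gt1; by rewrite qE.
Qed.
Lemma frobL (x y : L) : (x + y) ^+ q = x ^+ q + y ^+ q.
Proof.
have [p [k [pL _ qE]]] := charq.
apply: exprDn_pchar; rewrite (eq_pnat _ (pcharf_eq pL)) qE pnatX pnat_id //.
exact: pcharf_prime pL.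
Qed.
Lemma qK : (q%:R : K) = 0.
Proof.
have [p [k [_ pK qE]]] := charq.
apply/eqP; rewrite -(dvdn_pcharf pK) qE; exact: dvdn_exp.
Qed.
Lemma eRq a : eR a ^+ q = eR a.
Proof. by rewrite -rmorphXn expf_card. Qed.
Lemma eR_inj : injective eR. Proof. exact: fmorph_inj. Qed.
Lemma fixq_emb (x : L) : x ^+ q = x -> exists a, x = eR a.
Proof.
move=> xq; case: (boolP [exists a, x == eR a]) => [/existsP[a /eqP->]|]; first by exists a.
move=> /negP nx; exfalso.
pose rs := x :: map eR (enum Fq).
have nz : ('X^q - 'X : {poly L}) != 0.
  by rewrite -size_poly_eq0 size_polyDl ?size_polyXn // size_polyN size_polyX ltnS q_gt1.
have := @max_poly_roots _ _ rs nz.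
have -> : all (root ('X^q - 'X)) rs.
  apply/allP => z; rewrite inE => /predU1P[->|/mapP[a _ ->]];
  by rewrite rootE !hornerE ?xq ?eRq subrr.
have -> : uniq rs.
  rewrite /= (map_inj_uniq eR_inj) enum_uniq andbT; apply/negP => /mapP[a _ xa].
  by apply: nx; apply/existsP; exists a; rewrite xa.
move=> /(_ isT isT); rewrite size_polyDl ?size_polyXn ?size_polyN ?size_polyX ?ltnS ?q_gt1 //.
by rewrite /= size_map -cardE ltnn.
Qed.
Lemma ratio_emb (y mu cc : L) : cc != 0 -> mu != 0 ->
  y ^+ q + cc * y = 0 -> mu ^+ q + cc * mu = 0 -> exists b, y = eR b * mu.
Proof.
move=> cc0 mu0 hy hm.
have [b hb] : exists b, y / mu = eR b.
  apply: fixq_emb; rewrite expr_div_n.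
  have -> : y ^+ q = - (cc * y) by apply/eqP; rewrite -addr_eq0 hy.
  have -> : mu ^+ q = - (cc * mu) by apply/eqP; rewrite -addr_eq0 hm.
  by rewrite invrN mulrNN invfM mulrACA divff // mul1r.
by exists b; rewrite -hb divfK.
Qed.
Variable c : nat -> K.
Local Notation f := (f_act iota c).
Lemma fS s x : f s.+1 x = f s x ^+ q + iota (c s.+1) * f s x.
Proof. by []. Qed.
Lemma fD s x y : f s (x + y) = f s x + f s y.
Proof. elim: s => [|s IH] //; by rewrite !fS IH frobL mulrDr addrACA. Qed.
Lemma f0 s : f s 0 = 0.
Proof. elim: s => [|s IH] //; by rewrite fS IH expr0n /= gtn_eqF ?q_gt0 // mulr0 addr0. Qed.
Lemma fN s x : f s (- x) = - f s x.
Proof. by apply/eqP; rewrite -addr_eq0 -fD addNr f0. Qed.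
Lemma fB s x y : f s (x - y) = f s x - f s y.
Proof. by rewrite fD fN. Qed.
Lemma fZ s a x : f s (eR a * x) = eR a * f s x.
Proof. elim: s => [|s IH] //; by rewrite !fS IH exprMn eRq mulrDr mulrCA. Qed.
Lemma fsum s n (a : nat -> Fq) (w : nat -> L) :
  f s (\sum_(i < n) eR (a i) * w i) = \sum_(i < n) eR (a i) * f s (w i).
Proof.
elim: n => [|n IH]; first by rewrite !big_ord0 f0.
by rewrite !big_ord_recr /= fD IH fZ.
Qed.
Lemma fsig (sigma : {rmorphism L -> L}) : (forall k, sigma (iota k) = iota k) ->
  forall s x, sigma (f s x) = f s (sigma x).
Proof.
move=> hs; elim=> [|s IH] x //; by rewrite !fS rmorphD rmorphM rmorphXn IH hs.
Qed.
Lemma fmono s x : f s x = 0 -> f s.+1 x = 0.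
Proof. by move=> h; rewrite fS h expr0n /= gtn_eqF ?q_gt0 // mulr0 addr0. Qed.
Lemma fmono_le s t x : (s <= t)%N -> f s x = 0 -> f t x = 0.
Proof.
move=> /subnK <-; elim: (t - s)%N => [|n IH] h //; by rewrite addSn fmono // IH.
Qed.
Fixpoint Pp s : {poly K} :=
  match s with 0 => 'X | s'.+1 => Pp s' ^+ q + (c s)%:P * Pp s' end.
Lemma Ph s x : (map_poly iota (Pp s)).[x] = f s x.
Proof.
elim: s => [|s IH] /=; first by rewrite map_polyX hornerX.
by rewrite rmorphD rmorphM rmorphXn /= map_polyC hornerD hornerM horner_exp hornerC IH.
Qed.
Lemma Psize s : size (Pp s) = (q ^ s).+1 /\ Pp s \is monic.
Proof.
elim: s => [|s [IHs IHm]] /=; first by rewrite size_polyX monicX expn0.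
have se : size (Pp s ^+ q) = (q ^ s.+1).+1.
  have := size_exp (Pp s) q; rewrite IHs /= -expnSr => <-.
  by rewrite prednK // size_poly_gt0 expf_neq0 // -size_poly_eq0 IHs.
have hq : (q ^ s < q ^ s.+1)%N by rewrite ltn_exp2l // q_gt1.
have lt : (size ((c s.+1)%:P * Pp s)%R < size (Pp s ^+ q)%R)%N.
  apply: leq_ltn_trans (size_mul_leq _ _) _; rewrite se IHs size_polyC.
  move: hq; case: (c s.+1 != 0) => /= hq; lia.
split; first by rewrite size_polyDl // se.
by rewrite monicE lead_coefDl // -monicE monic_exp.
Qed.
Lemma Pderiv s : (Pp s)^`() = (\prod_(1 <= i < s.+1) c i)%:P.
Proof.
elim: s => [|s IH] /=; first by rewrite derivX big_geq.
rewrite derivD deriv_exp deriv_mulC -mulr_natr -polyC_natr qK polyC0 mulr0 add0r IH.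
by rewrite [in RHS]big_nat_recr //= -polyCM mulrC.
Qed.
Lemma Psep s : (forall i, (1 <= i <= s)%N -> c i != 0) -> separable_poly (Pp s).
Proof.
move=> hc; rewrite unlock /separable_poly Pderiv -[X in coprimep _ X]mulr1 mul_polyC coprimepZr ?coprimep1 //.
rewrite prodf_seq_neq0; apply/allP => i; rewrite mem_index_iota => /andP[h1 h2] /=.
by apply: hc; rewrite h1 -ltnS.
Qed.
Lemma exists_new s : is_sep_closure iota ->
  (forall i, (1 <= i <= s.+1)%N -> c i != 0) ->
  exists x, f s x != 0 /\ f s.+1 x = 0.
Proof.
move=> [_ HS] hc.
have sep := Psep hc.
have [rs hrs] := HS _ sep.
have [sz mon] := Psize s.+1.
move: hrs; rewrite (monicP mon) rmorph1 mul1r => hrs.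
have urs : uniq rs by rewrite -separable_prod_XsubC -hrs separable_map.
have szr : size rs = (q ^ s.+1)%N.
  by have := size_prod_XsubC rs id; rewrite -hrs size_map_poly sz => -[].
have rootrs : forall x, x \in rs -> f s.+1 x = 0.
  by move=> x xin; rewrite -Ph hrs; apply/eqP; rewrite -/(root _ x) root_prod_XsubC.
case: (boolP (all (fun x => f s x == 0) rs)) => [hall | /allPn [x xin hx]]; last first.
  by exists x; split => //; apply: rootrs.
exfalso.
have [szs _] := Psize s.
have nz : map_poly iota (Pp s) != 0 by rewrite -size_poly_eq0 size_map_poly szs.
have := @max_poly_roots _ _ rs nz.
rewrite urs size_map_poly szs szr ltnS leqNgt ltn_exp2l ?q_gt1 // ltnSn => H.
suff: false by []; apply: H => //.
by apply/allP => x xin; rewrite /root Ph; apply: (allP hall).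
Qed.
Lemma inW s x : (x \in Wsp iota c s) = (f s x == 0). Proof. by []. Qed.
Lemma sum_ext (a : nat -> Fq) (w : nat -> L) j n : (j <= n)%N ->
  (forall i, (j <= i)%N -> a i = 0) ->
  \sum_(i < n) eR (a i) * w i = \sum_(i < j) eR (a i) * w i.
Proof.
move=> /subnK <- ha; elim: (n - j)%N => [|k IH] //.
by rewrite addSn big_ord_recr /= IH (ha (k + j)) ?leq_addl // rmorph0 mul0r addr0.
Qed.
Variable r : nat.
Hypothesis HL : is_sep_closure iota.
Hypothesis Hc : forall i, (1 <= i <= r)%N -> c i != 0.
Definition ww (i : nat) : L :=
  epsilon (inhabits 0) (fun x => f i x != 0 /\ f i.+1 x = 0).
Lemma ww_spec i : (i < r)%N -> f i (ww i) != 0 /\ f i.+1 (ww i) = 0.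
Proof.
move=> ir; rewrite /ww; apply: (epsilon_spec (inhabits (0:L)) (fun x => f i x != 0 /\ f i.+1 x = 0)).
apply: exists_new => // k /andP[k1 k2].
by apply: Hc; rewrite k1 (leq_trans k2 ir).
Qed.
Lemma ww_in i t : (i < t)%N -> (t <= r)%N -> f t (ww i) = 0.
Proof.
move=> it tr; apply: (@fmono_le i.+1) => //; apply: (ww_spec (leq_trans it tr)).2.
Qed.
Lemma indep t : (t <= r)%N -> forall a : nat -> Fq,
  \sum_(i < t) eR (a i) * ww i = 0 -> forall i, (i < t)%N -> a i = 0.
Proof.
elim: t => [|t IH] tr a; first by [].
rewrite big_ord_recr /= => hs.
have hat : a t = 0.
  have := congr1 (f t) hs; rewrite f0 fD fsum fZ.
  rewrite big1 ?add0r; last by move=> i _; rewrite ww_in ?mulr0 //; apply: ltnW.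
  move/eqP; rewrite mulf_eq0 (negbTE (ww_spec tr).1) orbF fmorph_eq0 => /eqP //.
move: hs; rewrite hat rmorph0 mul0r addr0 => hs i; rewrite ltnS leq_eqVlt => /predU1P[-> //|].
by apply: IH => //; apply: ltnW.
Qed.
Lemma span t : (t <= r)%N -> forall x, f t x = 0 ->
  exists a : nat -> Fq, (forall i, (t <= i)%N -> a i = 0) /\
     x = \sum_(i < t) eR (a i) * ww i.
Proof.
elim: t => [|t IH] tr x hx.
  by exists (fun _ => 0); split => //; rewrite big_ord0.
have [h1 h2] := ww_spec tr.
have cn : iota (c t.+1) != 0 by rewrite fmorph_eq0 Hc.
have [b hb] := ratio_emb cn h1 hx h2.
have hx' : f t (x - eR b * ww t) = 0 by rewrite fB fZ -hb subrr.
have [a [ha hxa]] := IH (ltnW tr) _ hx'.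
exists (fun i => if i == t then b else a i); split.
  by move=> i hi; rewrite ifN ?ha ?(ltnW hi) // neq_ltn hi orbT.
rewrite big_ord_recr /= eqxx -[x](subrK (eR b * ww t)) hxa.
congr (_ + _); apply: eq_bigr => i _; by rewrite ifN // neq_ltn ltn_ord.
Qed.
Lemma basis_s s : (s <= r)%N -> Fq_basis iota (Wsp iota c s) (fun i : 'I_s => ww i).
Proof.
move=> sr; split.
- by move=> i; rewrite inW ww_in.
- move=> a ha i.
  pose a' := fun k => oapp a 0 (insub k).
  have h : \sum_(i < s) eR (a' i) * ww i = 0.
    rewrite -[RHS]ha /Fq_comb; apply: eq_bigr => k _; by rewrite /a' valK /= eRE.
  by have := indep sr h (ltn_ord i); rewrite /a' valK.
- move=> x; rewrite inW => /eqP hx; have [a [_ hxa]] := span sr hx.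
  by exists (fun i : 'I_s => a i); rewrite hxa /Fq_comb; apply: eq_bigr => k _; rewrite eRE.
Qed.
Lemma main_sec :
  (forall x : L, (x \in Wsp iota c 0) = (x == 0)) /\
  (forall s : nat, (1 <= s <= r)%N ->
     {subset Wsp iota c s.-1 <= Wsp iota c s}) /\
  (forall s : nat, (s <= r)%N ->
     [/\ Fq_subspace iota (Wsp iota c s), GK_stable iota (Wsp iota c s)
       & Fq_dim iota (Wsp iota c s) s]) /\
  (exists w : 'I_r -> L,
     Fq_basis iota (Wsp iota c r) w /\
     forall sigma : {rmorphism L -> L}, in_GK iota sigma ->
       forall j : 'I_r, exists a : 'I_r -> Fq,
         (forall i : 'I_r, (j <= i)%N -> a i = 0) /\
         sigma (w j) = kummer Fq (iota (- c j.+1)) sigma * w j + Fq_comb iota a w).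
Proof.
split; first by [].
split.
  move=> [|s] // _ x; rewrite !inW => /eqP h; apply/eqP; exact: fmono.
split.
  move=> s sr; split.
  - split; first by rewrite inW f0.
      by move=> x y; rewrite !inW fD => /eqP-> /eqP->; rewrite addr0.
    by move=> a x; rewrite !inW eRE fZ => /eqP->; rewrite mulr0.
  - by move=> sg [_ hs] x; rewrite !inW -fsig // => /eqP->; rewrite rmorph0.
  - by exists (fun i : 'I_s => ww i); apply: basis_s.
exists (fun i : 'I_r => ww i); split; first exact: basis_s.
move=> sg [_ hs] j.
have [h1 h2] := ww_spec (ltn_ord j).
pose mu := f j (ww j); have {}h1 : mu != 0 := h1.
have cn : iota (c j.+1) != 0 by rewrite fmorph_eq0; apply: Hc; rewrite /= ltn_ord.
have hmu : mu ^+ q + iota (c j.+1) * mu = 0 by rewrite -h2.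
have hmq : mu ^+ q.-1 = iota (- c j.+1).
  rewrite rmorphN; apply: (mulIf h1); rewrite -exprSr prednK ?q_gt0 //.
  by apply/eqP; rewrite mulNr -addr_eq0 hmu.
rewrite /kummer /=.
set P := (fun l : L => l ^+ q.-1 = iota (- c j.+1)).
have hlam : P (epsilon (inhabits (0:L)) P) := epsilon_spec (inhabits (0:L)) P (ex_intro _ mu hmq).
set lam := epsilon _ P in hlam *.
rewrite /P in hlam.
have lam0 : lam != 0.
  apply/eqP => l0; move: hlam; rewrite l0 expr0n /= -subn1 subn_eq0 leqNgt q_gt1 /= .
  by move/eqP; rewrite eq_sym rmorphN oppr_eq0 (negbTE cn).
have hlq : lam ^+ q + iota (c j.+1) * lam = 0.
  by rewrite -(prednK q_gt0) exprSr hlam rmorphN mulNr addNr.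
have [b0 hb0] := ratio_emb cn h1 hlq hmu.
have hsm : sg mu ^+ q + iota (c j.+1) * sg mu = 0.
  by rewrite -rmorphXn -(hs (c j.+1)) -rmorphM -rmorphD hmu rmorph0.
have [b hb] := ratio_emb cn h1 hsm hmu.
have -> : sg lam / lam = eR b.
  by rewrite {1}hb0 rmorphM eR_iota hs -eR_iota hb mulrCA -hb0 mulfK.
have hy : f j (sg (ww j) - eR b * ww j) = 0.
  by rewrite fB fZ -fsig // -/mu hb subrr.
have [a [ha hya]] := span (ltnW (ltn_ord j)) hy.
exists (fun i : 'I_r => a i); split; first by move=> i; apply: ha.
have -> : Fq_comb iota (fun i : 'I_r => a i) (fun i : 'I_r => ww i) = \sum_(i < r) eR (a i) * ww i.
  by apply: eq_bigr => i _; rewrite eRE.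
by rewrite (sum_ext _ (ltnW (ltn_ord j)) ha) -hya addrC subrK.
Qed.
End S.

Theorem lemma5p13 (Fq : finFieldType) (K : fieldExtType (Fqt Fq))
  (L : fieldType) (iota : {rmorphism K -> L})
  (HL : is_sep_closure iota)
  (r : nat) (c : nat -> K) (Hc : forall i, (1 <= i <= r)%N -> c i != 0) :
  (* 0 = W_0 *)
  (forall x : L, (x \in Wsp iota c 0) = (x == 0)) /\
  (* W_{s-1} ⊆ W_s, and each W_s is a G_K-stable F_q-subspace of dimension s *)
  (forall s : nat, (1 <= s <= r)%N ->
     {subset Wsp iota c s.-1 <= Wsp iota c s}) /\
  (forall s : nat, (s <= r)%N ->
     [/\ Fq_subspace iota (Wsp iota c s), GK_stable iota (Wsp iota c s)
       & Fq_dim iota (Wsp iota c s) s]) /\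
  (* upper triangular with diagonal characters kappa_(-c_1), ..., kappa_(-c_r) *)
  (exists w : 'I_r -> L,
     Fq_basis iota (Wsp iota c r) w /\
     forall sigma : {rmorphism L -> L}, in_GK iota sigma ->
       forall j : 'I_r, exists a : 'I_r -> Fq,
         (forall i : 'I_r, (j <= i)%N -> a i = 0) /\
         sigma (w j) = kummer Fq (iota (- c j.+1)) sigma * w j + Fq_comb iota a w).
Proof. exact: (main_sec HL Hc). Qed.
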